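(* Let $X$ be a finite connected vertex transitive graph and $D=\operatorname{diam}(X)$. Suppose that for some $\epsilon,c>0$ there exists a 3-caret of branch length $R=\epsilon D^c$ in $X$. Then $|X|>\epsilon' D^{1+c(\log_3 4-1)}$, where $\epsilon'=\tfrac12\epsilon^{\log_3 4-1}$.
   Context: A 3-caret of branch length $R$ in a graph (with graph metric $d$) is a triple $\gamma_1,\gamma_2,\gamma_3$ of geodesics from a vertex $v_0$ to vertices $v_1,v_2,v_3$ respectively, with $d(v_0,v_i)=R$ for $i=1,2,3$, such that for all $k_1,k_2,k_3$ and $i\neq j$, $d(\gamma_i(k_i),\gamma_j(k_j))\ge\max\{k_i,k_j\}$ (here $\gamma_i(k)$ is the vertex at distance $k$ from $v_0$ along $\gamma_i$). *)

(* Defs.v *)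
From mathcomp Require Import all_boot all_order all_algebra all_fingroup.
From mathcomp Require Import reals exp.
Set Implicit Arguments. Unset Strict Implicit. Unset Printing Implicit Defensive.

Section Graph.
Variables (T : finType) (e : rel T).

Fixpoint gball (n : nat) (x : T) : {set T} :=
  match n with
  | 0 => [set x]
  | n'.+1 => let B := gball n' x in B :|: [set y | [exists z in B, e z y]]
  end.

(* Graph metric: least n with y in the n-ball around x (walks of length <= #|T|
   suffice in a connected graph; the value #|T| is returned if unreachable). *)
Definition gdist (x y : T) : nat := find (fun n => y \in gball n x) (iota 0 #|T|).

Definition gconnected : Prop := forall x y : T, connect e x y.

Definition vertex_transitive : Prop :=
  forall x y : T, exists f : {perm T}, (forall u v, e (f u) (f v) = e u v) /\ f x = y.

Definition diam : nat := \max_(x : T) \max_(y : T) gdist x y.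

Definition geodesic_from (v0 : T) (r : nat) (gam : nat -> T) : Prop :=
  [/\ gam 0 = v0, (forall k, k < r -> e (gam k) (gam k.+1)) & gdist v0 (gam r) = r].

Definition caret3 (r : nat) : Prop :=
  exists (v0 : T) (gam : 'I_3 -> nat -> T),
    (forall i, geodesic_from v0 r (gam i)) /\
    (forall (i j : 'I_3) (ki kj : nat), i != j -> ki <= r -> kj <= r ->
        maxn ki kj <= gdist (gam i ki) (gam j kj)).
End Graph.

(* Main.v *)
Require Import Defs.
From mathcomp Require Import all_boot all_order all_algebra all_fingroup.
From mathcomp Require Import reals exp.
From mathcomp Require Import zify.
Import Order.TTheory GRing.Theory Num.Theory.
Set Implicit Arguments. Unset Strict Implicit. Unset Printing Implicit Defensive.

Section G.
Variables (T : finType) (e : rel T).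

Lemma gballS n x y : (y \in gball e n.+1 x) = (y \in gball e n x) || [exists z in gball e n x, e z y].
Proof. by rewrite /= !inE. Qed.

Lemma gball0 x y : (y \in gball e 0 x) = (y == x).
Proof. by rewrite /= inE. Qed.

Lemma gball_mono m n x : m <= n -> {subset gball e m x <= gball e n x}.
Proof.
move=> /subnK <-; elim: (n - m) => [//|k IH] y /IH Hy.
by rewrite addSn gballS Hy.
Qed.

Lemma gball_trans m n x y z : y \in gball e m x -> z \in gball e n y -> z \in gball e (m + n) x.
Proof.
move=> Hy; elim: n z => [|n IH] z; first by rewrite gball0 addn0 => /eqP->.
rewrite gballS addnS gballS => /orP[/IH->//|/existsP[w /andP[/IH Hw ew]]].
by apply/orP; right; apply/existsP; exists w; rewrite Hw.
Qed.

Lemma gball_edge x y : e x y -> y \in gball e 1 x.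
Proof. by move=> h; rewrite gballS; apply/orP; right; apply/existsP; exists x; rewrite gball0 eqxx. Qed.

Hypothesis esym : symmetric e.

Lemma gball_sym n x y : y \in gball e n x -> x \in gball e n y.
Proof.
elim: n y => [|n IH] y; first by rewrite !gball0 eq_sym.
rewrite gballS => /orP[/IH /(gball_mono (leqnSn n))//|/existsP[z /andP[/IH Hz ezy]]].
have eyz : e y z by rewrite esym.
have := gball_trans (gball_edge eyz) Hz; rewrite add1n; exact.
Qed.

Lemma path_gball x p : path e x p -> last x p \in gball e (size p) x.
Proof.
elim: p x => [|z p IH] x /=; first by rewrite gball0.
move=> /andP[exz /IH H]; have := gball_trans (gball_edge exz) H; by rewrite add1n.
Qed.

Hypothesis econn : gconnected e.

Lemma reach x y : exists2 k, k < #|T| & y \in gball e k x.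
Proof.
have /connectP[p pp ->] := econn x y.
case: (shortenP pp) => p' pp' up' _.
exists (size p'); last exact: path_gball.
have := max_card (mem (x :: p')); rewrite (card_uniqP up') /=; exact.
Qed.

Lemma gdist_le x y k : (gdist e x y <= k) = (y \in gball e k x).
Proof.
have [k0 k0lt hk0] := reach x y.
have hs : has (fun n => y \in gball e n x) (iota 0 #|T|).
  by apply/hasP; exists k0 => //; rewrite mem_iota.
have hf : gdist e x y < #|T| by have := hs; rewrite has_find size_iota.
apply/idP/idP => [h|h].
  apply: (gball_mono h); have := nth_find 0 hs; rewrite -/(gdist e x y) nth_iota //.
rewrite leqNgt; apply/negP => lt.
have kT : k < #|T| by exact: ltn_trans lt hf.
by have := before_find 0 lt; rewrite nth_iota // add0n h.
Qed.

Lemma gdist_in x y : y \in gball e (gdist e x y) x.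
Proof. by rewrite -gdist_le. Qed.

Lemma gdist_sym x y : gdist e x y = gdist e y x.
Proof.
apply/eqP; rewrite eqn_leq; apply/andP; split; rewrite gdist_le; apply: gball_sym; exact: gdist_in.
Qed.

Lemma gdist_tri x y z : gdist e x z <= gdist e x y + gdist e y z.
Proof. rewrite gdist_le; apply: gball_trans (gdist_in x y) (gdist_in y z). Qed.

Lemma gdist_edge x y : e x y -> gdist e x y <= 1.
Proof. move=> h; rewrite gdist_le; exact: gball_edge. Qed.

Lemma gdist_mid_aux x n : forall y, gdist e x y = n -> forall t, t <= n -> exists p, gdist e x p = t.
Proof.
elim: n => [|n IH] y dxy t ht.
  exists y; rewrite dxy; apply/eqP; rewrite eq_sym -leqn0; exact: ht.
case: (ltngtP t n.+1) ht => [tn _|//|tn _]; last by exists y; rewrite dxy tn.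
have := gdist_in x y; rewrite dxy gballS => /orP[hy|/existsP[z /andP[hz ezy]]].
  by move: hy; rewrite -gdist_le dxy ltnn.
have dz : gdist e x z = n.
  apply/eqP; rewrite eqn_leq gdist_le hz /= -ltnS.
  have h1 := gdist_tri x z y; have h2 := gdist_edge ezy.
  rewrite dxy in h1; lia.
exact: IH dz t tn.
Qed.

Lemma gdist_mid x y t : t <= gdist e x y -> exists p, gdist e x p = t.
Proof. exact: gdist_mid_aux. Qed.

Lemma disj_balls m x y : 2 * m < gdist e x y -> [disjoint gball e m x & gball e m y].
Proof.
move=> h; apply/pred0P => z /=; apply/negP => /andP[hx hy].
have : gdist e x y <= m + m by rewrite gdist_le; apply: gball_trans hx (gball_sym hy).
by rewrite addnn -mul2n leqNgt h.
Qed.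


Lemma card_bigcup_disj (F : nat -> {set T}) N :
  (forall i j, i < j < N -> [disjoint F i & F j]) ->
  #|\bigcup_(i < N) F i| = \sum_(i < N) #|F i|.
Proof.
elim: N => [|N IH] H; first by rewrite !big_ord0 cards0.
rewrite !big_ord_recr /= cardsU.
have -> : (\bigcup_(i < N) F i) :&: F N = set0.
  apply: disjoint_setI0; rewrite disjoint_sym; apply: bigcup_disjoint => i _.
  by rewrite disjoint_sym; apply: H; rewrite ltn_ord leqnn.
rewrite cards0 subn0 IH // => i j /andP[ij jN]; apply: H; rewrite ij /=.
exact: ltnW.
Qed.

Lemma gball_auto (f : {perm T}) : (forall u v, e (f u) (f v) = e u v) ->
  forall n x y, (f y \in gball e n (f x)) = (y \in gball e n x).
Proof.
move=> fe; elim=> [|n IH] x y; first by rewrite !gball0 (inj_eq perm_inj).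
rewrite !gballS IH; congr (_ || _); apply/existsP/existsP => [[z /andP[hz ez]]|[z /andP[hz ez]]].
  exists (f^-1 z)%g; rewrite -IH permKV hz /= -fe permKV //.
by exists (f z); rewrite IH hz fe.
Qed.

Hypothesis evt : vertex_transitive e.

Lemma bs_const n x y : #|gball e n x| = #|gball e n y|.
Proof.
have [f [fe <-]] := evt x y; symmetry.
rewrite -(card_preimset _ (@perm_inj _ f)); apply: eq_card => z.
by rewrite inE (gball_auto fe).
Qed.

Fixpoint nk j := if j is j'.+1 then 3 * nk j' + 1 else 0.

Lemma nkE j : 2 * nk j + 1 = 3 ^ j.
Proof. elim: j => [//|j IH]; rewrite /= expnS -IH; lia. Qed.

Lemma walk_gball (gam : nat -> T) r : (forall k, k < r -> e (gam k) (gam k.+1)) ->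
  forall k, k <= r -> gam k \in gball e k (gam 0).
Proof.
move=> H; elim=> [|k IH] kr; first by rewrite gball0.
have := gball_trans (IH (ltnW kr)) (gball_edge (H k kr)); by rewrite addn1.
Qed.

Variable r : nat.
Variable v0 : T.
Variable gam : 'I_3 -> nat -> T.
Hypothesis hgeo : forall i, geodesic_from e v0 r (gam i).
Hypothesis hcar : forall (i j : 'I_3) (ki kj : nat), i != j -> ki <= r -> kj <= r ->
        maxn ki kj <= gdist e (gam i ki) (gam j kj).

Lemma ball_rec j : 3 ^ j <= r -> 4 * #|gball e (nk j) v0| <= #|gball e (nk j.+1) v0|.
Proof.
move=> Lr; set m := nk j; set L := 3 ^ j.
have hL : L = 2 * m + 1 by rewrite /L -nkE.
pose F i := if i is i'.+1 then gball e m (gam (inord i') L) else gball e m v0.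
have g0 : forall i, gam i 0 = v0 by move=> i; case: (hgeo i).
have Hd : forall a b, a < b < 4 -> [disjoint F a & F b].
  move=> a b /andP[ab b4].
  case: b ab b4 => [|b]; first by rewrite ltn0.
  move=> ab b4; case: a ab => [|a] ab; apply: disj_balls.
    set jj : 'I_3 := inord b.
    pose ii : 'I_3 := if jj == ord0 then inord 1 else ord0.
    have nij : ii != jj.
      rewrite /ii; have [hj|hj] := eqVneq jj ord0; last by rewrite eq_sym.
      rewrite hj; apply/eqP => /(congr1 val); rewrite /= inordK //.
    have h := hcar nij (leq0n r) Lr; rewrite g0 max0n -/L hL in h; rewrite hL; lia.
  have nij : (inord a : 'I_3) != inord b.
    apply/eqP => /(congr1 val); rewrite /= !inordK; lia.
  have h := hcar nij Lr Lr; rewrite maxnn -/L hL in h; rewrite hL; lia.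
have := card_bigcup_disj Hd.
rewrite (eq_bigr (fun _ => #|gball e m v0|)); last first.
  by move=> [[|i] hi] _ //=; apply: bs_const.
rewrite sum_nat_const card_ord => <-.
apply: subset_leq_card; apply/bigcupsP => [[[|i] hi]] _ /=; apply/subsetP => z.
  by apply: gball_mono; rewrite /= /m; lia.
move=> hz; case: (hgeo (inord i)) => _ hw _.
have := gball_trans (walk_gball hw Lr) hz.
rewrite g0 /= -/m -/L hL.
have -> : 2 * m + 1 + m = 3 * m + 1 by lia.
exact.
Qed.


Lemma bs_lower k : (forall j, j < k -> 3 ^ j <= r) -> 4 ^ k <= #|gball e (nk k) v0|.
Proof.
elim: k => [|k IH] H; first by rewrite /= cards1.
apply: leq_trans (ball_rec (H k (leqnn _))); rewrite expnS leq_mul2l /=.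
by apply: IH => j jk; apply: H; apply: ltnW.
Qed.

Lemma packing m x y : (gdist e x y %/ (2 * m + 1)).+1 * #|gball e m x| <= #|T|.
Proof.
set q := gdist e x y %/ (2 * m + 1).
pose P i := odflt x [pick p | gdist e x p == i * (2 * m + 1)].
have HP : forall i, i <= q -> gdist e x (P i) = i * (2 * m + 1).
  move=> i iq; rewrite /P; case: pickP => [p /eqP //|H].
  have [p hp] : exists p, gdist e x p = i * (2 * m + 1).
    apply: (gdist_mid (y:=y)); apply: leq_trans (leq_trunc_div (gdist e x y) (2 * m + 1)).
    by rewrite -/q leq_mul2r iq orbT.
  by have := H p; rewrite hp eqxx.
pose F i := gball e m (P i).
have Hd : forall i j, i < j < q.+1 -> [disjoint F i & F j].
  move=> i j /andP[ij jq]; apply: disj_balls.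
  have hi : i <= q by lia.
  have hj : j <= q by lia.
  have h := gdist_tri x (P i) (P j); rewrite (HP i hi) (HP j hj) in h; nia.
have := card_bigcup_disj Hd.
rewrite (eq_bigr (fun _ => #|gball e m x|)); last by move=> i _; apply: bs_const.
rewrite sum_nat_const card_ord => <-; exact: max_card.
Qed.


End G.

Lemma main_nat (T : finType) (e : rel T) r k :
  symmetric e -> gconnected e -> vertex_transitive e -> caret3 e r ->
  (forall j, j < k -> 3 ^ j <= r) -> (diam e %/ 3 ^ k).+1 * 4 ^ k <= #|T|.
Proof.
move=> esym econ evt [v0 [gam [hg hc]]] hk.
have T0 : 0 < #|T| by apply/card_gt0P; exists v0.
have [x hx] := bigop.eq_bigmax (fun x => \max_(y : T) gdist e x y) T0.
have [y hy] := bigop.eq_bigmax (fun y => gdist e x y) T0.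
have hD : diam e = gdist e x y by rewrite /diam hx hy.
have := packing esym econ evt (nk k) x y.
rewrite nkE -hD (bs_const evt _ x v0).
move=> H; apply: leq_trans H; rewrite leq_mul2l; apply/orP; right.
exact: bs_lower hg hc _ hk.
Qed.

Unset Implicit Arguments.
Local Open Scope ring_scope.

Theorem lemma4p2p1 (R : realType) (T : finType) (e : rel T) (eps c : R) (r : nat) :
  symmetric e -> irreflexive e -> gconnected e -> vertex_transitive e ->
  0 < eps -> 0 < c ->
  r%:R = eps * (diam e)%:R `^ c ->
  caret3 e r ->
  ((1 / 2) * eps `^ (ln 4 / ln 3 - 1)) * (diam e)%:R `^ (1 + c * (ln 4 / ln 3 - 1))
    < #|T|%:R.
Proof.
move=> esym eirr econ evt eps0 c0 hr car.
have T0 : (0 < #|T|)%N by case: car => v0 _; apply/card_gt0P; exists v0.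
set a := ln 4 / ln 3 - 1.
have ln3 : 0 < ln (3 : R) by apply: ln_gt0; rewrite ltr1n.
have a0 : 0 < a.
  by rewrite /a subr_gt0 ltr_pdivlMr // mul1r ltr_ln ?posrE ?ltr0n // ltr_nat.
set D := diam e.
have Tpos : 0 < #|T|%:R :> R by rewrite ltr0n.
have [D0|Dpos] := eqVneq D 0%N.
  rewrite D0 powR0 ?mulr0 //; apply: lt0r_neq0; rewrite addr_gt0 ?ltr01 ?mulr_gt0 //.
have DR : 0 < D%:R :> R by rewrite ltr0n lt0n.
have -> : (1 / 2) * eps `^ a * D%:R `^ (1 + c * a) = (1 / 2) * (D%:R * r%:R `^ a).
  rewrite (powRD (x:=D%:R)); last by rewrite (gt_eqF DR) implybT.
  rewrite powRr1 ?(ltW DR) // powRrM hr powRM ?(ltW eps0) ?powR_ge0 //.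
  rewrite /D -!mulrA; congr (_ * (_ * _)); exact: mulrCA.
have [r0|rpos] := eqVneq r 0%N.
  by rewrite r0 powR0 ?mulr0 ?mulr0 // gt_eqF.
set k := (trunc_log 3 r).+1.
have hk : forall j, (j < k)%N -> (3 ^ j <= r)%N.
  move=> j jk; apply: leq_trans (trunc_logP _ _) => //; last by rewrite lt0n.
  by rewrite leq_exp2l.
have Hn := main_nat esym econ evt car hk.
have rk : (r < 3 ^ k)%N by apply: trunc_log_ltn.
have Dq := ltn_ceil D (expn_gt0 3 k).
have Hnat : (D * 4 ^ k < #|T| * 3 ^ k)%N.
  apply: (@leq_trans ((D %/ 3 ^ k).+1 * 3 ^ k * 4 ^ k)).
    by rewrite ltn_pmul2r ?expn_gt0.
  by rewrite mulnAC leq_mul2r Hn orbT.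
have h34 : (3 : R) `^ a = 4 / 3.
  rewrite /a powRB; last by apply/implyP => _; rewrite pnatr_eq0.
  by rewrite (powRr1 (a:=3)) ?ler0n // /powR pnatr_eq0 /= divfK ?gt_eqF // lnK // posrE ltr0n.
have hra : r%:R `^ a <= (4 / 3) ^+ k :> R.
  apply: (@le_trans _ _ ((3 ^ k)%N%:R `^ a)).
    apply: ge0_ler_powR; [exact: ltW a0|by rewrite nnegrE ler0n|by rewrite nnegrE ler0n|by rewrite ler_nat ltnW].
  by rewrite natrX -powR_mulrn ?ler0n // -powRrM mulrC powRrM h34 powR_mulrn // divr_ge0.
have HR : D%:R * (4 / 3) ^+ k < #|T|%:R :> R.
  rewrite expr_div_n mulrA ltr_pdivrMr ?exprn_gt0 ?ltr0n //.
  by rewrite -!natrX -!natrM ltr_nat.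
apply: le_lt_trans HR.
have ge0 : 0 <= D%:R * r%:R `^ a :> R by rewrite mulr_ge0 ?powR_ge0 ?ler0n.
apply: (@le_trans _ _ (D%:R * r%:R `^ a)).
  apply: ler_piMl => //; rewrite ler_pdivrMr ?ltr0n // mul1r.
  by rewrite ler1n.
by rewrite ler_wpM2l ?ler0n.
Qed.
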